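(* Let $n\ge 1$ be an integer and suppose that $A\subseteq\mathbb{Z}_5^n$ is sum-free. If $|A|>\frac32\cdot5^{n-1}$ and $A$ is contained in a union of two cosets of a proper subgroup $H<\mathbb{Z}_5^n$, then there is an element $e\notin H$ such that $A\subseteq(e+H)\cup(-e+H)$.
   Context: $\mathbb{Z}_5^n$ denotes the elementary abelian $5$-group of rank $n$. A subset $S$ of an abelian group is sum-free if there are no $x,y,z\in S$ (not necessarily distinct) with $x+y=z$. *)

(* Defs.v *)
From mathcomp Require Import all_boot all_order all_algebra.
Set Implicit Arguments. Unset Strict Implicit. Unset Printing Implicit Defensive.
Import GRing.Theory.
Local Open Scope ring_scope.

Notation Z5n n := 'rV['Z_5]_n.

Definition sum_free (n : nat) (S : {set Z5n n}) : Prop :=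
  forall x y z, x \in S -> y \in S -> z \in S -> x + y != z.

Definition is_subgroup (n : nat) (H : {set Z5n n}) : Prop :=
  0 \in H /\ (forall x y, x \in H -> y \in H -> x - y \in H).

Definition coset (n : nat) (e : Z5n n) (H : {set Z5n n}) : {set Z5n n} :=
  [set e + h | h in H].

(* Main.v *)
Require Import Defs.
From mathcomp Require Import all_boot all_order all_algebra.
From mathcomp Require Import zify.
Local Open Scope ring_scope.
Import GRing.Theory.
Set Implicit Arguments. Unset Strict Implicit.

Section Aux.
Variable n : nat.
Variable H : {set 'rV['Z_5]_n}.
Hypothesis HH : is_subgroup H.

Lemma sg0 : 0 \in H. Proof. by case: HH. Qed.
Lemma sgB x y : x \in H -> y \in H -> x - y \in H. Proof. by case: HH => _; apply. Qed.
Lemma sgN x : x \in H -> - x \in H.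
Proof. by move=> Hx; rewrite -sub0r sgB // sg0. Qed.
Lemma sgD x y : x \in H -> y \in H -> x + y \in H.
Proof. by move=> Hx Hy; rewrite -[y]opprK sgB // sgN. Qed.
Lemma sgMn x k : x \in H -> x *+ k \in H.
Proof. by move=> Hx; elim: k => [|k IH]; rewrite ?mulr0n ?sg0 // mulrS sgD. Qed.
Lemma sgZ (c : 'Z_5) x : x \in H -> c *: x \in H.
Proof. by move=> Hx; rewrite -[c]natr_Zp scaler_nat sgMn. Qed.

Lemma cosetP c y : (y \in coset c H) = (y - c \in H).
Proof.
apply/imsetP/idP => [[h Hh ->]|Hy]; first by rewrite addrC addKr.
by exists (y - c) => //; rewrite addrC subrK.
Qed.

Lemma card_coset c : #|coset c H| = #|H|.
Proof. by rewrite card_imset //; apply: addrI. Qed.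

Lemma pigeon c (X W : {set 'rV['Z_5]_n}) :
  X \subset coset c H -> W \subset coset c H -> (#|H| < #|X| + #|W|)%N ->
  exists z, z \in X :&: W.
Proof.
move=> sX sW lt; have := cardsUI X W.
have : (#|X :|: W| <= #|H|)%N.
  by rewrite -(card_coset c); apply: subset_leq_card; rewrite subUset sX.
case: (set_0Vmem (X :&: W)) => [->|[z Hz] _ _]; last by exists z.
rewrite cards0; lia.
Qed.

Lemma sumlem (A U V W : {set 'rV['Z_5]_n}) u v w :
  sum_free A -> U \subset A -> V \subset A -> W \subset A ->
  U \subset coset u H -> V \subset coset v H -> W \subset coset w H ->
  u + v - w \in H -> (#|H| < #|V| + #|W|)%N -> (0 < #|U|)%N -> False.
Proof.
move=> sf UA VA WA Uu Vv Ww uvw lt.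
case/card_gt0P => x xU.
set X := [set x + y | y in V].
have cX : #|X| = #|V| by rewrite card_imset //; apply: addrI.
have sX : X \subset coset w H.
  apply/subsetP => _ /imsetP [y yV ->]; rewrite cosetP.
  have xu : x - u \in H by rewrite -cosetP (subsetP Uu).
  have yv : y - v \in H by rewrite -cosetP (subsetP Vv).
  have -> : x + y - w = (x - u) + (y - v) + (u + v - w).
    by rewrite [(x - u) + _]addrACA -opprD addrA subrK.
  by apply: sgD => //; apply: sgD.
have lt2 : (#|H| < #|X| + #|W|)%N by rewrite cX.
have [z] := pigeon sX Ww lt2.
rewrite inE => /andP [/imsetP [y yV ->] zW].
have := sf x y (x + y) (subsetP UA _ xU) (subsetP VA _ yV) (subsetP WA _ zW).
by rewrite eqxx.
Qed.

Lemma count (I : finType) (c : I -> 'rV['Z_5]_n) :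
  (forall i j, c i - c j \in H -> i = j) -> (#|I| * #|H| <= 5 ^ n)%N.
Proof.
move=> Hc.
pose f := fun p : I * 'rV['Z_5]_n => c p.1 + p.2.
have inj : {in setX [set: I] H &, injective f}.
  move=> [i x] [j y]; rewrite !inE /f /= => xH yH e.
  have e2 : c i - c j = y - x.
    by apply/eqP; rewrite subr_eq addrAC [y + _]addrC -e addrK.
  have ij : i = j by apply: Hc; rewrite e2 sgB.
  by subst j; congr (_, _); apply: (addrI (c i)).
have := card_in_imset inj; rewrite cardsX cardsT => <-.
have -> : (5 ^ n)%N = #|{: 'rV['Z_5]_n}| by rewrite card_mx card_ord mul1n.
exact: max_card.
Qed.

End Aux.

Lemma Z5_cases (P : 'Z_5 -> Prop) :
  P 0 -> P 1 -> P 2%:R -> P 3%:R -> P 4%:R -> forall c, P c.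
Proof.
move=> P0 P1 P2 P3 P4 [[|[|[|[|[|k]]]]] Hk].
- by have -> : Ordinal Hk = 0 by apply/val_inj.
- by have -> : Ordinal Hk = 1 by apply/val_inj.
- by have -> : Ordinal Hk = 2%:R by apply/val_inj.
- by have -> : Ordinal Hk = 3%:R by apply/val_inj.
- by have -> : Ordinal Hk = 4%:R by apply/val_inj.
- by [].
Qed.

Lemma Z5_inv (d : 'Z_5) : d != 0 -> exists d', d' * d = 1.
Proof.
elim/Z5_cases: d => // _.
- by exists 1; rewrite mul1r.
- by exists 3%:R; apply/val_inj.
- by exists 2%:R; apply/val_inj.
- by exists 4%:R; apply/val_inj.
Qed.

Theorem lemma1 (n : nat) (A : {set 'rV['Z_5]_n}) :
  (0 < n)%N ->
  sum_free A ->
  (3 * 5 ^ n.-1 < 2 * #|A|)%N ->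
  forall H : {set 'rV['Z_5]_n},
    is_subgroup H -> H != [set: 'rV['Z_5]_n] ->
    (exists a b : 'rV['Z_5]_n, A \subset coset a H :|: coset b H) ->
    exists e : 'rV['Z_5]_n, e \notin H /\ A \subset coset e H :|: coset (- e) H.
Proof.
move=> n0 sf big H HH HT [a [b sAab]].
have scal g (i j : 'Z_5) : g \notin H -> i *: g - j *: g \in H -> i = j.
  move=> gH; rewrite -scalerBl => dH; apply/eqP; rewrite -subr_eq0.
  apply/negPn/negP => /Z5_inv [d' e]; move/negP: gH; apply.
  by rewrite -[g]scale1r -e -scalerA sgZ.
have P5 : (5 ^ n = 5 * 5 ^ n.-1)%N by rewrite -{1}(prednK n0) expnS.
have hb : (5 * #|H| <= 5 ^ n)%N.
  have [g gH] : exists g, g \notin H.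
    case: (pickP (fun g => g \notin H)) => [g gH|none]; first by exists g.
    case/eqP: HT; apply/setP => g; rewrite inE; have := none g => /= /negbFE.
    by [].
  have := count HH (c := fun i : 'Z_5 => i *: g) (fun i j => scal g i j gH).
  by rewrite card_ord.
set A1 := A :&: coset a H; set A2 := A :&: coset b H.
have cA : (#|A| <= #|A1| + #|A2|)%N.
  apply: leq_trans (leq_card_setU _ _); apply: subset_leq_card.
  by rewrite -setIUr subsetI subxx sAab.
have c1 : (#|A1| <= #|H|)%N by rewrite -(card_coset H a); apply: subset_leq_card; apply: subsetIr.
have c2 : (#|A2| <= #|H|)%N by rewrite -(card_coset H b); apply: subset_leq_card; apply: subsetIr.
have l1 : (#|H| < #|A1| + #|A1|)%N by lia.
have l2 : (#|H| < #|A2| + #|A2|)%N by lia.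
have l12 : (#|H| < #|A1| + #|A2|)%N by lia.
have l21 : (#|H| < #|A2| + #|A1|)%N by lia.
have p1 : (0 < #|A1|)%N by lia.
have p2 : (0 < #|A2|)%N by lia.
have sA1 : A1 \subset A by apply: subsetIl.
have sA2 : A2 \subset A by apply: subsetIl.
have a1 : A1 \subset coset a H by apply: subsetIr.
have b2 : A2 \subset coset b H by apply: subsetIr.
have aH : a \notin H.
  apply/negP => aH; apply: (sumlem HH sf sA1 sA1 sA1 a1 a1 a1 _ l1 p1).
  by rewrite addrK.
have bH : b \notin H.
  apply/negP => bH; apply: (sumlem HH sf sA2 sA2 sA2 b2 b2 b2 _ l2 p2).
  by rewrite addrK.
case abH : (b + a \in H).
  exists a; split => //; apply: (subset_trans sAab); apply: setUS.
  apply/subsetP => y; rewrite !cosetP opprK => yb.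
  by have := sgD HH yb abH; rewrite addrA subrK.
exfalso.
have Bfree c : b - c *: a \notin H.
  apply/negP; elim/Z5_cases: c.
  - by rewrite scale0r subr0; apply/negP.
  - rewrite scale1r => baH.
    have : (#|A| <= #|H|)%N.
      rewrite -(card_coset H a); apply: subset_leq_card.
      apply: (subset_trans sAab); rewrite subUset subxx /=.
      apply/subsetP => y; rewrite !cosetP => yb.
      by have := sgD HH yb baH; rewrite addrA subrK.
    lia.
  - rewrite scaler_nat mulr2n => e.
    apply: (sumlem HH sf sA1 sA1 sA2 a1 a1 b2 _ l12 p1).
    by rewrite -opprB sgN.
  - move=> e; have := sgZ HH 2%:R e.
    rewrite scalerBr scalerA (_ : 2%:R * 3%:R = 1); last by apply/val_inj.
    rewrite scale1r scaler_nat mulr2n => e2.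
    exact: (sumlem HH sf sA2 sA2 sA1 b2 b2 a1 e2 l21 p2).
  - rewrite (_ : 4%:R = -1); last by apply/val_inj.
    by rewrite scaleN1r opprK abH.
pose c (p : 'Z_5 * bool) := p.1 *: a + (if p.2 then b else 0).
have cinj : forall p q, c p - c q \in H -> p = q.
  move=> [i [|]] [j [|]]; rewrite /c /=.
  - rewrite opprD addrACA subrr addr0 => e.
    by rewrite (scal a i j aH e).
  - rewrite addr0 => e; case/negP: (Bfree (j - i)).
    by rewrite scalerBl opprB addrA [b + _]addrC.
  - rewrite addr0 => e; case/negP: (Bfree (i - j)).
    have -> : b - (i - j) *: a = - (i *: a - (j *: a + b)).
      by rewrite scalerBl !opprB addrA [b + _]addrC.
    exact: sgN.
  - by rewrite !addr0 => e; rewrite (scal a i j aH e).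
have := count HH cinj; rewrite card_prod card_ord card_bool.
move=> C; have C2 : (10 * #|H| <= 5 ^ n)%N by exact: C.
lia.
Qed.
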